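(* Under assumption (R), the function $\ell^{\mathrm{tr}}:[0,1]\times\mathbb R^d\times\mathbb S^d_+\to[0,+\infty]$ is nonnegative, is convex in $\Sigma_1\in\mathbb S^d_+$ for each fixed $(t,x)$, and is lower semicontinuous jointly in $(t,x,\Sigma_1)$.
   Context: Continuous reference data $\lambda_2:[0,1]\times\mathbb R^d\to(0,\infty)$, $\bar\Sigma_2:[0,1]\times\mathbb R^d\to\mathbb S^d_{++}$. Assumption (R): there are $0<\underline b\le\overline b<\infty$, $M>0$ with $\underline b\le\lambda_2\le\overline b$ and $\bar\Sigma_2\preceq MI_d$ everywhere. For $\Sigma_1\in\mathbb S^d_+$ let $\lambda_1:=\frac1d\mathrm{tr}(\bar\Sigma_2(t,x)^{-1}\Sigma_1)$ and, if $\Sigma_1\ne0$, $\bar\Sigma_1:=\Sigma_1/\lambda_1$. Define $\ell^{\mathrm{tr}}(t,x,\Sigma_1)=\lambda_1\log\frac{\lambda_1}{\lambda_2(t,x)}-\lambda_1+\lambda_2(t,x)-\frac{\lambda_1}2\log\det(\bar\Sigma_2(t,x)^{-1}\bar\Sigma_1)$ if $\Sigma_1\in\mathbb S^d_{++}$; $=\lambda_2(t,x)$ if $\Sigma_1=0$; $=+\infty$ if $\Sigma_1$ is singular and nonzero. *)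

(* Defs.v *)
From HB Require Import structures.
From mathcomp Require Import all_boot all_order all_algebra.
From mathcomp Require Import all_classical all_reals all_analysis.
Set Implicit Arguments. Unset Strict Implicit. Unset Printing Implicit Defensive.
Import Order.TTheory GRing.Theory Num.Theory.
Import numFieldNormedType.Exports.
Local Open Scope classical_set_scope.
Local Open Scope ring_scope.

Definition psdmx (R : realType) (d : nat) (A : 'M[R]_d) : Prop :=
  A^T = A /\ forall v : 'rV[R]_d, 0 <= (v *m A *m v^T) 0 0.

Definition pdmx (R : realType) (d : nat) (A : 'M[R]_d) : Prop :=
  A^T = A /\ forall v : 'rV[R]_d, v != 0 -> 0 < (v *m A *m v^T) 0 0.

Definition loewner_le (R : realType) (d : nat) (A B : 'M[R]_d) : Prop :=
  psdmx (B - A).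

Definition lam1 (R : realType) (d : nat) (S2 S1 : 'M[R]_d) : R :=
  (d%:R)^-1 * \tr (invmx S2 *m S1).

Definition ltr (R : realType) (d : nat)
  (lam2 : R -> 'rV[R]_d -> R) (Sig2 : R -> 'rV[R]_d -> 'M[R]_d)
  (t : R) (x : 'rV[R]_d) (S1 : 'M[R]_d) : \bar R :=
  let l2 := lam2 t x in
  let l1 := lam1 (Sig2 t x) S1 in
  if pselect (pdmx S1) then
    (l1 * ln (l1 / l2) - l1 + l2
      - l1 / 2%:R * ln (\det (invmx (Sig2 t x) *m (l1^-1 *: S1))))%:E
  else if pselect (S1 = 0) then l2%:E
  else +oo%E.

Definition lsc_on (T : topologicalType) (R : realType) (A : set T)
  (f : T -> \bar R) : Prop :=
  forall p, A p -> forall a : \bar R, (a < f p)%E ->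
    \forall q \near within A (nbhs p), (a < f q)%E.

(* Main.v *)
Require Import Defs.
From HB Require Import structures.
From mathcomp Require Import all_boot all_order all_algebra.
From mathcomp Require Import all_classical all_reals all_analysis.
From mathcomp Require Import ring lra.
Import Order.TTheory GRing.Theory Num.Theory.
Import numFieldNormedType.Exports.
Local Open Scope classical_set_scope.
Local Open Scope ring_scope.

Module Aux.
Set Implicit Arguments. Unset Strict Implicit. Unset Printing Implicit Defensive.

Section MX.
Variable R : realType.

Lemma pd_unit n (A : 'M[R]_n) : pdmx A -> A \in unitmx.
Proof.
move=> [_ hA]; rewrite unitmxE unitfE; apply/negP => /det0P [v v0 vA].
by have := hA v v0; rewrite vA mul0mx mxE ltxx.
Qed.

Lemma pd_congr n (A K : 'M[R]_n) : pdmx A -> K \in unitmx -> pdmx (K^T *m A *m K).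
Proof.
move=> [sA hA] uK; split.
  by rewrite !trmx_mul trmxK sA mulmxA.
move=> v v0; have -> : v *m (K^T *m A *m K) *m v^T = (v *m K^T) *m A *m (v *m K^T)^T.
  by rewrite trmx_mul trmxK !mulmxA.
apply: hA; apply: contra v0 => /eqP h.
by rewrite -(mulmxK (_ : K^T \in unitmx) v) ?h ?mul0mx // unitmx_tr.
Qed.

Lemma pd_inv n (A : 'M[R]_n) : pdmx A -> pdmx (invmx A).
Proof.
move=> hA; have uA := pd_unit hA; have [sA _] := hA.
have -> : invmx A = (invmx A)^T *m A *m invmx A.
  by rewrite trmx_inv sA -mulmxA mulmxV // mulmx1.
by apply: pd_congr => //; rewrite unitmx_inv.
Qed.


Lemma pd_pos1 n (A : 'M[R]_(1 + n)) : pdmx A -> 0 < ulsubmx A 0 0.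
Proof.
move=> [_ hA].
have v0 : row_mx (1 : 'M[R]_1) (0 : 'rV_n) != 0.
  by rewrite row_mx_eq0 negb_and oner_eq0.
have := hA _ v0; rewrite -{1}(submxK A) mul_row_block tr_row_mx mul_row_col.
by rewrite !mul1mx !mul0mx !addr0 trmx0 mulmx0 addr0 trmx1 mulmx1.
Qed.

Lemma chol n (A : 'M[R]_n) : pdmx A -> exists K : 'M[R]_n, is_trig_mx K /\ A = K *m K^T.
Proof.
elim: n A => [|n IH] A.
  by exists 0; split; [exact: mx0_is_trig | apply/matrixP => [[]]].
move: A; rewrite -[n.+1]/(1 + n)%N => A hA.
have apos : 0 < ulsubmx A 0 0 by apply: pd_pos1.
move: hA; rewrite -[A]submxK.
set a := ulsubmx A; set b := ursubmx A.
set c := dlsubmx A; set C := drsubmx A.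
move: apos; rewrite -/a => apos.
move=> [sA hA].
have [_ eqbc _ sC] : [/\ a^T = a, c^T = b, b^T = c & C^T = C].
  by move: sA; rewrite tr_block_mx => /eq_block_mx.
set al := a 0 0.
have ea : a = al%:M by rewrite [a]mx11_scalar.
have ebc : b^T = c by rewrite -eqbc trmxK.
set C' := C - al^-1 *: (c *m b).
have pdC' : pdmx C'.
  split.
    by rewrite /C' linearB /= sC linearZ /= trmx_mul eqbc -ebc.
  move=> v v0.
  pose z := row_mx (- al^-1 *: (v *m c)) v.
  have z0 : z != 0 by rewrite row_mx_eq0 negb_and v0 orbT.
  have := hA _ z0.
  have -> : z *m block_mx a b c C = row_mx 0 (v *m C') .
    rewrite mul_row_block ea mul_mx_scalar scalerA mulrN mulfV ?gt_eqF //.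
    rewrite scaleN1r addNr; congr row_mx.
    by rewrite /C' mulmxBr -scalemxAl -scalemxAr mulmxA scaleNr addrC.
  by rewrite tr_row_mx mul_row_col mul0mx add0r.
have [K' [tK' eK']] := IH _ pdC'.
set s := Num.sqrt al.
have s0 : 0 < s by rewrite sqrtr_gt0.
exists (block_mx (s%:M : 'M[R]_1) 0 (s^-1 *: c) K'); split.
  by rewrite is_trig_block_mx // eqxx scalar_mx_is_trig.
rewrite tr_block_mx mulmx_block; congr block_mx.
- by rewrite trmx0 mulmx0 addr0 tr_scalar_mx -scalar_mxM -expr2 sqr_sqrtr ?ltW // ea.
- rewrite mul0mx addr0 mul_scalar_mx linearZ /= scalerA mulfV ?gt_eqF //.
  by rewrite scale1r eqbc.
  rewrite trmx0 mulmx0 addr0 tr_scalar_mx mul_mx_scalar scalerA mulfV ?gt_eqF //.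
  by rewrite scale1r.
- rewrite linearZ /= -scalemxAl -scalemxAr scalerA -expr2 exprVn sqr_sqrtr ?ltW //.
  by rewrite eqbc -eK' /C' addrC subrK.
Qed.


Lemma pd_det_gt0 n (Y : 'M[R]_n) : pdmx Y -> 0 < \det Y.
Proof.
move=> hY; have [K [tK eK]] := chol hY.
have : \det Y != 0 by rewrite -unitfE -unitmxE pd_unit.
rewrite eK det_mulmx det_tr -expr2 lt0r => ->.
by rewrite sqr_ge0.
Qed.

Lemma pd_det_le n (Y : 'M[R]_n) : pdmx Y -> \det Y <= expR (\tr Y - n%:R).
Proof.
move=> hY; have [K [tK eK]] := chol hY.
have -> : \det Y = \prod_i (K i i ^+ 2).
  by rewrite eK det_mulmx det_tr -expr2 (det_trig tK) prodrXl.
apply: (le_trans (y := \prod_i expR (K i i ^+ 2 - 1))).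
  apply: ler_prod => i _; rewrite sqr_ge0 /=.
  by have := expR_ge1Dx (K i i ^+ 2 - 1); rewrite addrC subrK.
rewrite -expR_sum ler_expR sumrB sumr_const card_ord lerB // /mxtrace eK.
apply: ler_sum => i _; rewrite mxE (bigD1 i) //= mxE expr2 lerDl.
by apply: sumr_ge0 => j _; rewrite mxE -expr2 sqr_ge0.
Qed.


Lemma pd2_det n (P X : 'M[R]_n) : pdmx P -> pdmx X ->
  0 < \det (P *m X) /\ \det (P *m X) <= expR (\tr (P *m X) - n%:R).
Proof.
move=> hP hX; have [K [_ eK]] := chol hP.
have uK : K \in unitmx.
  have := pd_unit hP; rewrite eK !unitmxE det_mulmx unitrM; by case/andP.
have hY := pd_congr hX uK.
have e1 : \det (P *m X) = \det (K^T *m X *m K).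
  rewrite eK !det_mulmx !det_tr; ring.
have e2 : \tr (P *m X) = \tr (K^T *m X *m K).
  by rewrite eK -mulmxA mxtrace_mulC -mulmxA.
by rewrite e1 e2; split; [exact: pd_det_gt0 | exact: pd_det_le].
Qed.


Lemma psd_congr n (A K : 'M[R]_n) : psdmx A -> psdmx (K^T *m A *m K).
Proof.
move=> [sA hA]; split; first by rewrite !trmx_mul trmxK sA mulmxA.
move=> v; have -> : v *m (K^T *m A *m K) *m v^T = (v *m K^T) *m A *m (v *m K^T)^T.
  by rewrite trmx_mul trmxK !mulmxA.
exact: hA.
Qed.

Lemma psd_ker n (S : 'M[R]_n) (v : 'rV[R]_n) : psdmx S ->
  (v *m S *m v^T) 0 0 = 0 -> v *m S = 0.
Proof.
move=> [sS hS] h0.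
suff hw : forall w : 'rV[R]_n, (w *m S *m v^T) 0 0 = 0.
  apply: trmx_inj; rewrite trmx0 trmx_mul sS.
  apply/matrixP => j k; rewrite ord1 !mxE.
  have := hw (delta_mx 0 j); rewrite -mulmxA mxE (bigD1 j) //= big1.
    by rewrite !mxE !eqxx mul1r addr0.
  by move=> i /negbTE ij; rewrite !mxE ij andbF mul0r.
move=> w.
set b : R := (w *m S *m v^T) 0 0; set g : R := (w *m S *m w^T) 0 0.
have g0 : 0 <= g by apply: hS.
have e : forall e : R, ((v + e *: w) *m S *m (v + e *: w)^T) 0 0 = 2 * e * b + e ^+ 2 * g.
  move=> e; rewrite linearD /= linearZ /= mulmxDl mulmxDr !mulmxDl.
  have mZ : forall (a : R) (M : 'M[R]_1), (a *: M) 0 0 = a * M 0 0 by move=> a M; rewrite mxE.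
  have mD : forall (M N : 'M[R]_1), (M + N) 0 0 = M 0 0 + N 0 0 by move=> M N; rewrite mxE.
  rewrite -!scalemxAl -!scalemxAr !mD !mZ.
  have -> : (v *m S *m w^T) 0 0 = b.
    have -> : v *m S *m w^T = (w *m S *m v^T)^T by rewrite !trmx_mul trmxK sS mulmxA.
    by rewrite mxE.
  rewrite -/b -/g h0; ring.
have := hS (v + (- b / (g + 1)) *: w); rewrite e.
set e0 : R := - b / (g + 1).
have g1 : 0 < g + 1 by lra.
move=> h.
have he : 2 * e0 * b + e0 ^+ 2 * g = - (b ^+ 2 * (g + 2)) / (g + 1) ^+ 2.
  rewrite /e0; field; by rewrite gt_eqF.
rewrite he in h.
have h2 : b ^+ 2 * (g + 2) <= 0.
  move: h; rewrite pmulr_lge0 ?invr_gt0 ?exprn_gt0 //; lra.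
have : b ^+ 2 <= 0 by move: h2; rewrite pmulr_lle0 //; lra.
by rewrite expr2 => hb; nra.
Qed.


Lemma diag_qf n (Y : 'M[R]_n) i :
  (@delta_mx R 1 n 0 i *m Y *m (@delta_mx R 1 n 0 i)^T) 0 0 = Y i i.
Proof. by rewrite -rowE trmx_delta -colE !mxE. Qed.

Lemma tr_psd n (P S : 'M[R]_n) : pdmx P -> psdmx S ->
  0 <= \tr (P *m S) /\ (\tr (P *m S) = 0 -> S = 0).
Proof.
move=> hP hS; have [K [_ eK]] := chol hP.
have uK : K \in unitmx.
  have := pd_unit hP; rewrite eK !unitmxE det_mulmx unitrM; by case/andP.
have hY := psd_congr K hS; have [_ pY] := hY.
have e2 : \tr (P *m S) = \tr (K^T *m S *m K).
  by rewrite eK -mulmxA mxtrace_mulC -mulmxA.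
rewrite e2; set Y := K^T *m S *m K.
have Yii : forall i, 0 <= Y i i by move=> i; rewrite -diag_qf.
split; first by apply: sumr_ge0 => i _; exact: Yii.
move=> t0.
have Y0 : forall i, Y i i = 0.
  move=> i; apply/eqP; move/eqP: t0; rewrite /mxtrace psumr_eq0; last by move=> j _; exact: Yii.
  by move/allP => /(_ i (mem_index_enum i)) /implyP /(_ isT).
have : Y = 0.
  apply/row_matrixP => i; rewrite rowE row0.
  by apply: psd_ker => //; rewrite diag_qf Y0.
rewrite /Y => /(congr1 (fun M => invmx K^T *m M *m invmx K)).
by rewrite mulmx0 mul0mx !mulmxA mulmxK // mulVmx ?unitmx_tr // mul1mx.
Qed.

Lemma tr_pd n (P S : 'M[R]_n) : (0 < n)%N -> pdmx P -> pdmx S -> 0 < \tr (P *m S).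
Proof.
move=> n0 hP hS; have [sS pS] := hS.
have hS' : psdmx S by split => // v; case: (eqVneq v 0) => [->|/pS/ltW//]; rewrite !mul0mx mxE.
have [t0 t1] := tr_psd hP hS'; rewrite lt_neqAle t0 andbT eq_sym.
apply/negP => /eqP /t1 S0.
have e0 : @delta_mx R 1 n 0 (Ordinal n0) != 0.
  apply/negP => /eqP/matrixP/(_ 0 (Ordinal n0)); rewrite !mxE !eqxx /=.
  by move/eqP; rewrite oner_eq0.
by have := pS _ e0; rewrite S0 mulmx0 mul0mx mxE ltxx.
Qed.


Lemma det_rank1 n (v : 'rV[R]_n) (mu : R) :
  \det (1%:M + (mu *: v^T) *m v) = 1 + mu * (v *m v^T) 0 0.
Proof.
set w := mu *: v^T.
pose N := block_mx (1%:M : 'M[R]_1) (- v) w (1%:M : 'M[R]_n).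
have e1 : N = block_mx 1%:M 0 w 1%:M *m block_mx 1%:M (- v) 0 (1%:M + w *m v).
  rewrite mulmx_block ?mul1mx ?mul0mx ?mulmx1 ?mulmx0 ?addr0 ?add0r mulmxN addrC -addrA addrN addr0.
  by [].
have e2 : N = block_mx (1%:M + v *m w) (- v) 0 1%:M *m block_mx 1%:M 0 w 1%:M.
  rewrite mulmx_block ?mul1mx ?mul0mx ?mulmx1 ?mulmx0 ?addr0 ?add0r mulNmx.
  by rewrite addrK.
have := congr1 determinant e2; rewrite {1}e1 !det_mulmx det_lblock det_ublock.
rewrite det_ublock !det1 !mul1r !mulr1 => ->.
by rewrite det_mx11 /w -scalemxAr !mxE eqxx mulr1n.
Qed.


Lemma pd_scale n (A : 'M[R]_n) (k : R) : 0 < k -> pdmx A -> pdmx (k *: A).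
Proof.
move=> k0 [sA hA]; split; first by rewrite linearZ /= sA.
by move=> v v0; rewrite -scalemxAr -scalemxAl mxE mulr_gt0 // hA.
Qed.

Lemma pd_psd n (A : 'M[R]_n) : pdmx A -> psdmx A.
Proof.
move=> [sA hA]; split => // v; case: (eqVneq v 0) => [->|/hA/ltW//].
by rewrite !mul0mx mxE.
Qed.

Lemma vvT_gt0 n (v : 'rV[R]_n) : v != 0 -> 0 < (v *m v^T) 0 0.
Proof.
move=> v0; rewrite mxE lt_neqAle; apply/andP; split; last first.
  by apply: sumr_ge0 => j _; rewrite mxE -expr2 sqr_ge0.
apply: contra v0; rewrite eq_sym psumr_eq0; last first.
  by move=> j _; rewrite mxE -expr2 sqr_ge0.
move=> /allP h; apply/eqP/rowP => j; rewrite mxE.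
have := h j (mem_index_enum j); rewrite mxE -expr2 => /implyP /(_ isT).
by rewrite sqrf_eq0 => /eqP.
Qed.

Lemma pd1 n : pdmx (1%:M : 'M[R]_n).
Proof. by split; [rewrite tr_scalar_mx | move=> v v0; rewrite mulmx1 vvT_gt0]. Qed.

Lemma pd_add_psd n (A B : 'M[R]_n) : pdmx A -> psdmx B -> pdmx (A + B).
Proof.
move=> [sA hA] [sB hB]; split; first by rewrite linearD /= sA sB.
by move=> v v0; rewrite mulmxDr mulmxDl mxE ltr_wpDr // hA.
Qed.

Lemma psd_rank1 n (v : 'rV[R]_n) mu : 0 <= mu -> psdmx ((mu *: v^T) *m v).
Proof.
move=> mu0; split; first by rewrite trmx_mul linearZ /= trmxK -scalemxAl -scalemxAr.
move=> w; rewrite -scalemxAl -scalemxAr -scalemxAl mxE mulr_ge0 //.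
have -> : w *m (v^T *m v) *m w^T = (w *m v^T) *m (w *m v^T)^T.
  by rewrite trmx_mul trmxK !mulmxA.
by rewrite mxE big_ord1 !mxE -expr2 sqr_ge0.
Qed.

Lemma pd_comb n (S S' : 'M[R]_n) th : pdmx S -> psdmx S' -> 0 < th -> th <= 1 ->
  pdmx (th *: S + (1 - th) *: S').
Proof.
move=> [sS hS] [sS' hS'] t0 t1; split.
  by rewrite linearD /= !linearZ /= sS sS'.
have mZ : forall (a : R) (M : 'M[R]_1), (a *: M) 0 0 = a * M 0 0 by move=> a M; rewrite mxE.
have mD : forall (M N : 'M[R]_1), (M + N) 0 0 = M 0 0 + N 0 0 by move=> M N; rewrite mxE.
move=> v v0; rewrite mulmxDr mulmxDl -!scalemxAr -!scalemxAl mD !mZ.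
by apply: ltr_wpDr; [rewrite mulr_ge0 ?subr_ge0 // hS' | rewrite mulr_gt0 // hS].
Qed.

End MX.

Section Fun.
Variables (R : realType) (d : nat).
Hypothesis hd : (0 < d)%N.

Definition Lf (B : 'M[R]_d) (c : R) (S : 'M[R]_d) : R :=
  let l := lam1 B S in
  l * ln (l / c) - l + c - l / 2%:R * ln (\det (invmx B *m (l^-1 *: S))).

Definition Gf (B : 'M[R]_d) (c u : R) (P S : 'M[R]_d) : R :=
  let l := lam1 B S in
  u * l - c * expR (u - 1) - l + c + 2%:R^-1 * (d%:R * l - \tr (P *m S) + l * ln (\det (B *m P))).

Lemma lam1_pos (B S : 'M[R]_d) : pdmx B -> pdmx S -> 0 < lam1 B S.
Proof.
move=> hB hS; rewrite /lam1 mulr_gt0 ?invr_gt0 ?ltr0n //.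
by apply: tr_pd => //; apply: pd_inv.
Qed.

Lemma G_le (B : 'M[R]_d) c u (P S : 'M[R]_d) : pdmx B -> 0 < c -> pdmx P -> pdmx S -> Gf B c u P S <= Lf B c S.
Proof.
move=> hB c0 hP hS; rewrite /Gf /Lf; set l := lam1 B S.
have l0 : 0 < l by apply: lam1_pos.
set X := l^-1 *: S.
have hX : pdmx X by apply: pd_scale; rewrite ?invr_gt0.
have hBi := pd_inv hB.
have [d1 _] := pd2_det hBi hX.
have [d2 _] := pd2_det hB hP.
have [d3 d4] := pd2_det hP hX.
have eL : ln (\det (invmx B *m X)) + ln (\det (B *m P)) = ln (\det (P *m X)).
  rewrite -lnM ?posrE //; congr ln.
  rewrite !det_mulmx det_inv; have := pd_unit hB; rewrite unitmxE unitfE => hdB.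
  by field.
have eT : \tr (P *m X) = l^-1 * \tr (P *m S) by rewrite /X -scalemxAr mxtraceZ.
have f3 : ln (\det (P *m X)) <= l^-1 * \tr (P *m S) - d%:R.
  by rewrite -eT -(expRK (\tr (P *m X) - d%:R)) ler_ln ?posrE ?expR_gt0.
have f3' : l * ln (\det (P *m X)) <= \tr (P *m S) - d%:R * l.
  have := ler_wpM2l (ltW l0) f3; rewrite mulrBr mulrA mulfV ?gt_eqF // mul1r.
  by rewrite [l * d%:R]mulrC.
have lc0 : 0 < l / c by rewrite divr_gt0.
have f1 : l * (u - ln (l / c)) <= c * expR (u - 1).
  have -> : expR (u - 1) = expR (u - 1 - ln (l / c)) * (l / c).
    have e : expR (ln (l / c)) = l / c := lnK lc0.
    by rewrite -{2}e -expRD subrK.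
  have := expR_ge1Dx (u - 1 - ln (l / c)).
  move=> h2.
  have -> : c * (expR (u - 1 - ln (l / c)) * (l / c)) = l * expR (u - 1 - ln (l / c)).
    by field; rewrite gt_eqF.
  apply: (ler_wpM2l (ltW l0)); apply: le_trans h2; rewrite le_eqVlt; apply/orP; left; apply/eqP; ring.
have -> : ln (\det (invmx B *m (l^-1 *: S))) = ln (\det (P *m X)) - ln (\det (B *m P)).
  by rewrite -eL -/X addrK.
set L := ln (\det (P *m X)); set L2 := ln (\det (B *m P)).
set T := \tr (P *m S); set E := expR (u - 1); set Lc := ln (l / c).
rewrite mulrBr.
have : l / 2%:R * L <= (T - d%:R * l) / 2%:R.
  rewrite mulrAC ler_pM2r ?invr_gt0 ?ltr0n //.
move: f1 f3'; rewrite -/L -/T -/E -/Lc.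
move=> f1 f3' hh.
have e1 : 2%:R^-1 * (d%:R * l - T + l * L2) = (d%:R * l - T) / 2%:R + l / 2%:R * L2.
  by rewrite /=; field.
rewrite e1.
nra.
Qed.


Lemma Lf_ge0 (B S : 'M[R]_d) c : pdmx B -> 0 < c -> pdmx S -> 0 <= Lf B c S.
Proof.
move=> hB c0 hS.
have := G_le 1 hB c0 (pd_inv hB) hS; apply: le_trans.
rewrite /Gf mulmxV ?pd_unit // det1 ln1 mulr0 addr0 subrr expR0 mulr1.
have -> : \tr (invmx B *m S) = d%:R * lam1 B S.
  by rewrite /lam1 mulrA mulfV ?mul1r // pnatr_eq0 -lt0n.
lra.
Qed.

Lemma G_opt (B S : 'M[R]_d) c : pdmx B -> 0 < c -> pdmx S ->
  exists u P, pdmx P /\ Gf B c u P S = Lf B c S.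
Proof.
move=> hB c0 hS; set l := lam1 B S.
have l0 : 0 < l by apply: lam1_pos.
have lc0 : 0 < l / c by rewrite divr_gt0.
exists (1 + ln (l / c)), (l *: invmx S); split.
  by apply: pd_scale => //; apply: pd_inv.
rewrite /Gf /Lf -/l.
have uS := pd_unit hS; have uB := pd_unit hB.
have dB : \det B != 0 by rewrite -unitfE -unitmxE.
have dS : \det S != 0 by rewrite -unitfE -unitmxE.
have -> : 1 + ln (l / c) - 1 = ln (l / c) by ring.
rewrite lnK // -scalemxAl mulVmx // mxtraceZ mxtrace1.
have -> : \det (invmx B *m (l^-1 *: S)) = (\det (B *m (l *: invmx S)))^-1.
  rewrite !det_mulmx !detZ !det_inv exprVn; field.
  by rewrite dB dS /= expf_neq0 // gt_eqF.
have p : 0 < \det (B *m (l *: invmx S)).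
  by have [] := pd2_det hB (pd_scale l0 (pd_inv hS)).
rewrite lnV ?posrE //.
by field; rewrite gt_eqF.
Qed.

Lemma G_zero (B P : 'M[R]_d) c u : Gf B c u P 0 = c - c * expR (u - 1).
Proof.
rewrite /Gf /lam1 !mulmx0 mxtrace0 !mulr0; ring.
Qed.

Lemma lam1_lin (B S S' : 'M[R]_d) th :
  lam1 B (th *: S + (1 - th) *: S') = th * lam1 B S + (1 - th) * lam1 B S'.
Proof.
by rewrite /lam1 mulmxDr -!scalemxAr mxtraceD !mxtraceZ; ring.
Qed.

Lemma G_aff (B P S S' : 'M[R]_d) c u th :
  Gf B c u P (th *: S + (1 - th) *: S') = th * Gf B c u P S + (1 - th) * Gf B c u P S'.
Proof.
rewrite /Gf lam1_lin mulmxDr -!scalemxAr mxtraceD !mxtraceZ.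
ring.
Qed.


Definition Lval (B : 'M[R]_d) (c : R) (S : 'M[R]_d) : \bar R :=
  if pselect (pdmx S) then (Lf B c S)%:E
  else if pselect (S = 0) then c%:E else +oo%E.

Lemma Lval_ge0 (B S : 'M[R]_d) c : pdmx B -> 0 < c -> (0 <= Lval B c S)%E.
Proof.
move=> hB c0; rewrite /Lval; case: (pselect (pdmx S)) => [hS|nS]; first by rewrite lee_fin Lf_ge0.
by case: (pselect (S = 0)) => h0; rewrite ?leey // lee_fin ltW.
Qed.

Lemma G_le_Lval (B P S : 'M[R]_d) c u : pdmx B -> 0 < c -> pdmx P ->
  ((Gf B c u P S)%:E <= Lval B c S)%E.
Proof.
move=> hB c0 hP; rewrite /Lval; case: (pselect (pdmx S)) => [hS|nS].
  by rewrite lee_fin G_le.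
case: (pselect (S = 0)) => [eS|h0] /=; rewrite ?leey //; subst S; rewrite G_zero lee_fin.
by rewrite lerBlDr lerDl mulr_ge0 ?ltW ?expR_gt0.
Qed.


Lemma Lval_oo (B S : 'M[R]_d) c : ~ pdmx S -> S != 0 -> Lval B c S = +oo%E.
Proof.
move=> nS S0; rewrite /Lval; case: (pselect (pdmx S)) => // h1.
by case: (pselect (S = 0)) => // e; rewrite e eqxx in S0.
Qed.

Lemma Lval_pd (B S : 'M[R]_d) c : pdmx S -> Lval B c S = (Lf B c S)%:E.
Proof. by move=> hS; rewrite /Lval; case: (pselect (pdmx S)). Qed.

Lemma Lval_0 (B : 'M[R]_d) c : Lval B c 0 = c%:E.
Proof.
rewrite /Lval; case: (pselect (pdmx (0 : 'M[R]_d))) => [[s0 h]|h1].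
  pose v := @const_mx R 1 d 1.
  have v0 : v != 0.
    apply/negP => /eqP/matrixP/(_ 0 (Ordinal hd)); rewrite !mxE => /eqP.
    by rewrite oner_eq0.
  by have := h _ v0; rewrite mulmx0 mul0mx mxE ltxx.
by case: (pselect ((0 : 'M[R]_d) = 0)).
Qed.

Lemma Lval_conv (B S S' : 'M[R]_d) c th : pdmx B -> 0 < c -> psdmx S -> psdmx S' ->
  0 <= th <= 1 ->
  (Lval B c (th *: S + (1 - th) *: S') <= th%:E * Lval B c S + (1 - th)%:E * Lval B c S')%E.
Proof.
move=> hB c0 hS hS' /andP[t0 t1].
case: (eqVneq th 0) => [->|tn0].
  by rewrite scale0r add0r subr0 scale1r mul0e add0e mul1e.
case: (eqVneq th 1) => [->|tn1].
  by rewrite subrr scale0r addr0 scale1r mul0e adde0 mul1e.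
have tp : 0 < th by rewrite lt_neqAle eq_sym tn0.
have tq : 0 < 1 - th by rewrite subr_gt0 lt_neqAle tn1.
case: (pselect (pdmx (th *: S + (1 - th) *: S'))) => hC.
  have [u [P [hP eG]]] := G_opt hB c0 hC.
  rewrite Lval_pd // -eG G_aff EFinD !EFinM.
  apply: leeD; apply: lee_wpmul2l; try (by rewrite lee_fin ltW); exact: (G_le_Lval _ _ hB c0 hP).
have nS : ~ pdmx S by move=> h; apply: hC; exact: pd_comb.
have nS' : ~ pdmx S'.
  move=> h; apply: hC; have := pd_comb h hS tq; rewrite lerBlDr lerDl => /(_ t0).
  have -> : 1 - (1 - th) = th by ring.
  by rewrite addrC.
  
have g1 := Lval_ge0 S hB c0; have g2 := Lval_ge0 S' hB c0.
have m1 : (th%:E * Lval B c S)%E != -oo%E.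
  by rewrite -ltNye (lt_le_trans _ (mule_ge0 _ g1)) // ?lee_fin ?ltW // ltNyr.
have m2 : ((1 - th)%:E * Lval B c S')%E != -oo%E.
  by rewrite -ltNye (lt_le_trans _ (mule_ge0 _ g2)) // ?lee_fin ?ltW // ltNyr.
case: (eqVneq S 0) => [e0|Sn0]; last first.
  have -> : Lval B c S = +oo%E by apply: Lval_oo.
  by rewrite muleC gt0_mulye ?lte_fin // addye // leey.
case: (eqVneq S' 0) => [e0'|S'n0]; last first.
  have -> : Lval B c S' = +oo%E by apply: Lval_oo.
  by rewrite [((1 - th)%:E * _)%E]muleC gt0_mulye ?lte_fin // addey // leey.
subst; rewrite !scaler0 addr0 Lval_0 -!EFinM -EFinD lee_fin.
by rewrite -mulrDl addrC subrK mul1r.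
Qed.


Lemma exists_G (B S : 'M[R]_d) c r : pdmx B -> 0 < c -> psdmx S ->
  (r%:E < Lval B c S)%E -> exists u P, pdmx P /\ r < Gf B c u P S.
Proof.
move=> hB c0 hS.
case: (pselect (pdmx S)) => hpd.
  rewrite Lval_pd // lte_fin => h; have [u [P [hP e]]] := G_opt hB c0 hpd.
  by exists u, P; rewrite e.
case: (eqVneq S 0) => [->|Sn0].
  rewrite Lval_0 lte_fin => rc.
  set k := (c - r) / (2 * c).
  have k0 : 0 < k by rewrite /k divr_gt0 ?subr_gt0 ?mulr_gt0.
  exists (1 + ln k), 1%:M; split; first exact: pd1.
  rewrite G_zero.
  have -> : 1 + ln k - 1 = ln k by ring.
  rewrite lnK ?posrE //.
  have -> : c * k = (c - r) / 2 by rewrite /k; field; rewrite gt_eqF.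
  lra.
have [v [v0 vq]] : exists v : 'rV[R]_d, v != 0 /\ (v *m S *m v^T) 0 0 = 0.
  case: (pselect (exists v : 'rV[R]_d, v != 0 /\ ~ (0 < (v *m S *m v^T) 0 0))).
    move=> [v [v0 nv]]; exists v; split => //.
    have := hS.2 v; rewrite le_eqVlt => /orP [/eqP <- //|h].
    by exfalso; apply: nv.
  move=> hno; exfalso; apply: hpd; split; first exact: hS.1.
  move=> v v0; case: (boolP (0 < (v *m S *m v^T) 0 0)) => // nv.
  by exfalso; apply: hno; exists v; split => //; apply/negP.
have vS := psd_ker hS vq.
set l := lam1 B S.
have l0 : 0 < l.
  have [t0 t1] := tr_psd (pd_inv hB) hS.
  rewrite /l /lam1 mulr_gt0 ?invr_gt0 ?ltr0n // lt_neqAle t0 andbT.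
  by apply/negP => /eqP/esym/t1 e; rewrite e eqxx in Sn0.
set s := (v *m v^T) 0 0.
have s0 : 0 < s by apply: vvT_gt0.
have dB0 : 0 < \det B := pd_det_gt0 hB.
set K := (2 * r - d%:R * l + \tr S) / l - ln (\det B).
set mu := expR K / s.
exists 1, (1%:M + (mu *: v^T) *m v); split.
  apply: pd_add_psd; first exact: pd1.
  by apply: psd_rank1; rewrite ltW // divr_gt0 ?expR_gt0.
rewrite /Gf -/l subrr expR0 mulr1 mul1r.
have eT : \tr ((1%:M + (mu *: v^T) *m v) *m S) = \tr S.
  by rewrite mulmxDl mul1mx mxtraceD -mulmxA vS mulmx0 mxtrace0 addr0.
have eD : \det (B *m (1%:M + (mu *: v^T) *m v)) = \det B * (1 + expR K).
  by rewrite det_mulmx det_rank1 -/s /mu divfK // gt_eqF.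
have p1 : 0 < 1 + expR K by rewrite addr_gt0 ?expR_gt0.
rewrite eT eD lnM ?posrE //.
have hK : K < ln (1 + expR K).
  by rewrite -{1}(expRK K) ltr_ln ?posrE ?expR_gt0 // -subr_gt0 addrK ltr01.
have h2 : l * K < l * ln (1 + expR K) by rewrite ltr_pM2l.
have eK : l * K = 2 * r - d%:R * l + \tr S - l * ln (\det B).
  by rewrite /K; field; rewrite gt_eqF.
lra.
Qed.

End Fun.


Section Cvg.
Variables (R : realType) (T : Type) (F : set_system T).
Hypothesis FF : Filter F.

Lemma cvg_sumr (I : Type) (r : seq I) (P : pred I) (g : I -> T -> R) (l : I -> R) :
  (forall i, g i @ F --> l i) ->
  (fun q => \sum_(i <- r | P i) g i q) @ F --> \sum_(i <- r | P i) l i.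
Proof.
move=> h; elim: r => [|i r IH].
  rewrite big_nil; under eq_cvg do rewrite big_nil; exact: cvg_cst.
rewrite big_cons; under eq_cvg do rewrite big_cons.
by case: (P i) => //; apply: cvgD.
Qed.

Lemma cvg_prodr (I : Type) (r : seq I) (P : pred I) (g : I -> T -> R) (l : I -> R) :
  (forall i, g i @ F --> l i) ->
  (fun q => \prod_(i <- r | P i) g i q) @ F --> \prod_(i <- r | P i) l i.
Proof.
move=> h; elim: r => [|i r IH].
  rewrite big_nil; under eq_cvg do rewrite big_nil; exact: cvg_cst.
rewrite big_cons; under eq_cvg do rewrite big_cons.
by case: (P i) => //; apply: cvgM.
Qed.

Definition mxcvg m n (f : T -> 'M[R]_(m, n)) (L : 'M[R]_(m, n)) :=
  forall i j, (fun q => f q i j) @ F --> L i j.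

Lemma mxcvg_cst m n (L : 'M[R]_(m, n)) : mxcvg (fun=> L) L.
Proof. move=> i j; exact: cvg_cst. Qed.

Lemma mxcvg_mul m n p (f : T -> 'M[R]_(m, n)) (g : T -> 'M[R]_(n, p)) A B :
  mxcvg f A -> mxcvg g B -> mxcvg (fun q => f q *m g q) (A *m B).
Proof.
move=> hf hg i j; rewrite mxE; under eq_cvg do rewrite mxE.
by apply: cvg_sumr => k; apply: cvgM.
Qed.

Lemma mxcvg_scale m n (f : T -> 'M[R]_(m, n)) A (k : R) :
  mxcvg f A -> mxcvg (fun q => k *: f q) (k *: A).
Proof.
move=> hf i j; rewrite mxE; under eq_cvg do rewrite mxE.
by apply: cvgM => //; exact: cvg_cst.
Qed.

Lemma cvg_tr n (f : T -> 'M[R]_n) A : mxcvg f A -> (fun q => \tr (f q)) @ F --> \tr A.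
Proof. by move=> hf; apply: cvg_sumr => i; apply: hf. Qed.

Lemma cvg_det n (f : T -> 'M[R]_n) A : mxcvg f A -> (fun q => \det (f q)) @ F --> \det A.
Proof.
move=> hf; apply: cvg_sumr => s; apply: cvgM; first exact: cvg_cst.
by apply: cvg_prodr => i; apply: hf.
Qed.

Lemma mxcvg_inv n (f : T -> 'M[R]_n) A : A \in unitmx -> mxcvg f A ->
  mxcvg (fun q => invmx (f q)) (invmx A).
Proof.
move=> uA hf i j.
have dA : \det A != 0 by rewrite -unitfE -unitmxE.
have hd := cvg_det hf.
have ev : \forall q \near F, f q \in unitmx.
  have : `|\det A| > 0 by rewrite normr_gt0.
  move=> h; near=> q; rewrite unitmxE unitfE.
  suff : 0 < `|\det (f q)| by rewrite normr_gt0.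
  near: q; apply: (cvgr_gt (f := fun q => `|\det (f q)|)) h.
  by apply: cvg_norm.
have hg : (fun q => (\det (f q))^-1 * \adj (f q) i j) @ F --> invmx A i j.
  rewrite /invmx uA mxE; apply: cvgM; first by apply: cvgV.
  rewrite mxE; under eq_cvg do rewrite mxE.
  apply: cvgM; first exact: cvg_cst.
  apply: cvg_det => a b; rewrite !mxE; under eq_cvg do rewrite !mxE.
  exact: hf.
apply: cvg_trans _ hg; apply: near_eq_cvg.
by near=> q; rewrite /invmx ifT ?mxE //; near: q.
Unshelve. all: by end_near.
Qed.

End Cvg.

End Aux.
Import Aux.

Theorem mainTheorem10 (R : realType) (d : nat) (hd : (0 < d)%N)
  (lam2 : R -> 'rV[R]_d -> R) (Sig2 : R -> 'rV[R]_d -> 'M[R]_d)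
  (lb ub M : R)
  (lam2_cont : {within [set p : R * 'rV[R]_d | 0 <= p.1 <= 1],
                 continuous (fun p => lam2 p.1 p.2)})
  (Sig2_cont : {within [set p : R * 'rV[R]_d | 0 <= p.1 <= 1],
                 continuous (fun p => Sig2 p.1 p.2)})
  (Sig2_pd : forall t x, 0 <= t <= 1 -> pdmx (Sig2 t x))
  (hlb : 0 < lb) (hlbub : lb <= ub) (hM : 0 < M)
  (lam2_bd : forall t x, 0 <= t <= 1 -> lb <= lam2 t x <= ub)
  (Sig2_bd : forall t x, 0 <= t <= 1 -> loewner_le (Sig2 t x) (M%:M)) :
  (forall t x S1, 0 <= t <= 1 -> psdmx S1 -> (0 <= ltr lam2 Sig2 t x S1)%E)
  /\
  (forall t x, 0 <= t <= 1 ->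
     forall S S' (th : R), psdmx S -> psdmx S' -> 0 <= th <= 1 ->
     (ltr lam2 Sig2 t x (th *: S + (1 - th) *: S')
        <= th%:E * ltr lam2 Sig2 t x S + (1 - th)%:E * ltr lam2 Sig2 t x S')%E)
  /\
  lsc_on [set p : R * 'rV[R]_d * 'M[R]_d | 0 <= p.1.1 <= 1 /\ psdmx p.2]
         (fun p => ltr lam2 Sig2 p.1.1 p.1.2 p.2).
Proof.
have eL : forall t x S, ltr lam2 Sig2 t x S = Lval (Sig2 t x) (lam2 t x) S by [].
have c0 : forall t x, 0 <= t <= 1 -> 0 < lam2 t x.
  by move=> t x ht; have /andP[h _] := lam2_bd t x ht; exact: lt_le_trans h.
split.
  by move=> t x S1 ht _; rewrite eL; apply: Lval_ge0 => //; [apply: Sig2_pd | apply: c0].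
split.
  move=> t x ht S S' th hS hS' hth; rewrite !eL.
  by apply: Lval_conv => //; [apply: Sig2_pd | apply: c0].
set D := [set p : R * 'rV[R]_d * 'M[R]_d | 0 <= p.1.1 <= 1 /\ psdmx p.2].
set Dp := [set p : R * 'rV[R]_d | 0 <= p.1 <= 1].
move=> p [hp hpS] a ha.
case: a ha => [r| |] ha; last first.
- apply: nearW => q; rewrite eL /Lval.
  case: pselect => [h0|h1]; first by rewrite ltNyr.
  by case: pselect => h2; rewrite ?ltNyr ?ltNye.
- by move: ha; rewrite ltNge leey.
have hB0 := Sig2_pd p.1.1 p.1.2 hp; have hc0 := c0 p.1.1 p.1.2 hp.
have [u [P [hP hr]]] := exists_G hd hB0 hc0 hpS ha.
set F := within D (nbhs p).
have hfst : (fun q : R * 'rV[R]_d * 'M[R]_d => q.1) @ F --> within Dp (nbhs p.1).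
  move=> W /= hW; rewrite /F /within /=.
  have h1 : nbhs p (fun q : R * 'rV[R]_d * 'M[R]_d => Dp q.1 -> W q.1).
    exact: (@cvg_fst _ _ (nbhs p.1) (nbhs p.2) _ _ hW).
  by apply: filterS h1 => q h2 hDq; apply: h2; case: hDq.
have hlam : (fun q : R * 'rV[R]_d * 'M[R]_d => lam2 q.1.1 q.1.2) @ F --> lam2 p.1.1 p.1.2.
  move/subspace_continuousP : lam2_cont => /(_ p.1 hp) hl0.
  exact: (@cvg_comp _ _ _ _ _ _ _ _ hfst hl0).
have hSig : mxcvg F (fun q : R * 'rV[R]_d * 'M[R]_d => Sig2 q.1.1 q.1.2) (Sig2 p.1.1 p.1.2).
  move=> i j; move/subspace_continuousP : Sig2_cont => /(_ p.1 hp) hs0.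
  apply: (@cvg_comp _ _ _ (fun q : R * 'rV[R]_d * 'M[R]_d => q.1) (fun r : R * 'rV[R]_d => Sig2 r.1 r.2 i j) _ _ _ hfst).
  apply: (@cvg_comp _ _ _ (fun r : R * 'rV[R]_d => Sig2 r.1 r.2) (fun M : 'M[R]_d => M i j) _ _ _ hs0).
  exact: coord_continuous.
have hSq : mxcvg F (fun q : R * 'rV[R]_d * 'M[R]_d => q.2) p.2.
  move=> i j; apply: cvg_within_filter.
  apply: (@cvg_comp _ _ _ (fun q : R * 'rV[R]_d * 'M[R]_d => q.2) (fun M : 'M[R]_d => M i j) _ _ _ (@cvg_snd _ _ (nbhs p.1) (nbhs p.2) _)).
  exact: coord_continuous.
have uB0 := pd_unit hB0.
have hl : (fun q : R * 'rV[R]_d * 'M[R]_d => lam1 (Sig2 q.1.1 q.1.2) q.2) @ F -->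
          lam1 (Sig2 p.1.1 p.1.2) p.2.
  rewrite /lam1; apply: cvgM; first exact: cvg_cst.
  apply: cvg_tr; apply: mxcvg_mul => //; exact: mxcvg_inv.
have hT : (fun q : R * 'rV[R]_d * 'M[R]_d => \tr (P *m q.2)) @ F --> \tr (P *m p.2).
  by apply: cvg_tr; apply: mxcvg_mul => //; exact: mxcvg_cst.
have hdet : (fun q : R * 'rV[R]_d * 'M[R]_d => \det (Sig2 q.1.1 q.1.2 *m P)) @ F -->
            \det (Sig2 p.1.1 p.1.2 *m P).
  by apply: cvg_det; apply: mxcvg_mul => //; exact: mxcvg_cst.
have dpos : 0 < \det (Sig2 p.1.1 p.1.2 *m P) by have [] := pd2_det hB0 hP.
have hln : (fun q : R * 'rV[R]_d * 'M[R]_d => ln (\det (Sig2 q.1.1 q.1.2 *m P))) @ F -->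
            ln (\det (Sig2 p.1.1 p.1.2 *m P)).
  exact: (cvg_comp _ _ hdet (continuous_ln dpos)).
set g := fun q : R * 'rV[R]_d * 'M[R]_d => Gf (Sig2 q.1.1 q.1.2) (lam2 q.1.1 q.1.2) u P q.2.
have hg : g @ F --> g p.
  rewrite /g /Gf.
  apply: cvgD; last first.
    apply: cvgM; first exact: cvg_cst.
    apply: cvgD; last by apply: cvgM.
    by apply: cvgB => //; apply: cvgM => //; exact: cvg_cst.
  apply: cvgD => //; apply: cvgB => //; apply: cvgB.
    by apply: cvgM => //; exact: cvg_cst.
  by apply: cvgM => //; exact: cvg_cst.
have h1 := cvgr_gt _ hg _ hr.
have h2 : F D by apply: withinT.
near=> q.
have [hq1 hq2] : D q by near: q; exact: h2.
have hq : r < g q by near: q; exact: h1.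
apply: (lt_le_trans _ (G_le_Lval hd _ u (Sig2_pd _ _ hq1) (c0 _ _ hq1) hP)).
by rewrite lte_fin.
Unshelve. all: by end_near.
Qed.
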